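(* Let $G$ be a connected $(2K_2, HVN)$-free graph. Then either $G$ is $(2K_2,\text{diamond})$-free, or there exists a partition $(V_1,V_2,V_3,V_4)$ of $V(G)$ (parts possibly empty) such that (i) $G[V_1]$ is a $(2K_2,\text{paw})$-free graph with $\omega(G[V_1])\le\omega(G)-1$, and (ii) $V_i$ is an independent set for each $i\in\{2,3,4\}$.
   Context: All graphs are finite, simple and undirected. $2K_2$ is the disjoint union of two edges. A diamond is $K_4$ minus an edge. A paw is the graph on $\{a,b,c,d\}$ with edges $ab,bc,ac,ad$. $HVN$ is the graph $K_1+\text{paw}$, i.e., a $K_4$ together with one further vertex adjacent to exactly two vertices of the $K_4$. A graph is $\mathcal F$-free if it has no induced subgraph isomorphic to a member of $\mathcal F$. $G[S]$ is the subgraph induced by $S$; $\omega$ is the clique number. *)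

(* Defs.v *)
From mathcomp Require Import all_boot.
Set Implicit Arguments. Unset Strict Implicit. Unset Printing Implicit Defensive.

Definition simple_graph (T : finType) (e : rel T) : Prop :=
  symmetric e /\ irreflexive e.

Definition connected (T : finType) (e : rel T) : Prop :=
  forall x y : T, connect e x y.

Definition pat (k : nat) (E : seq (nat * nat)) : rel 'I_k :=
  fun i j => ((nat_of_ord i, nat_of_ord j) \in E) || ((nat_of_ord j, nat_of_ord i) \in E).

Definition twoK2 : rel 'I_4 := @pat 4 [:: (0,1); (2,3)].
Definition diamond : rel 'I_4 := @pat 4 [:: (0,1); (0,2); (0,3); (1,2); (1,3)].
Definition paw : rel 'I_4 := @pat 4 [:: (0,1); (1,2); (0,2); (0,3)].
(* HVN: K4 on 0..3, vertex 4 adjacent to exactly 0 and 1 *)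
Definition HVN : rel 'I_5 :=
  @pat 5 [:: (0,1); (0,2); (0,3); (1,2); (1,3); (2,3); (4,0); (4,1)].

Definition has_induced (T : finType) (e : rel T) (S : {set T}) (k : nat) (h : rel 'I_k) : Prop :=
  exists f : 'I_k -> T, injective f /\ (forall i, f i \in S) /\
    (forall i j, e (f i) (f j) = h i j).

Definition free_in (T : finType) (e : rel T) (S : {set T}) (k : nat) (h : rel 'I_k) : Prop :=
  ~ has_induced e S h.

Definition is_clique (T : finType) (e : rel T) (S A : {set T}) : bool :=
  (A \subset S) && [forall x in A, forall y in A, (x != y) ==> e x y].

Definition omega_in (T : finType) (e : rel T) (S : {set T}) : nat :=
  \max_(A : {set T} | is_clique e S A) #|A|.

Definition independent (T : finType) (e : rel T) (A : {set T}) : Prop :=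
  forall x y, x \in A -> y \in A -> ~~ e x y.

(* Main.v *)
Require Import Defs.
From mathcomp Require Import all_boot.
From Stdlib Require Import Classical.
From mathcomp Require Import zify.

Lemma inj_of_sep k (h : rel 'I_k) (T : finType) (e : rel T) (f : 'I_k -> T) :
  irreflexive e -> (forall i j, e (f i) (f j) = h i j) ->
  (forall i j : 'I_k, i != j -> h i j \/ exists l, h i l != h j l) ->
  injective f.
Proof.
move=> irr Hf sep i j fij; apply/eqP; apply/negPn/negP => nij.
have [hij | [l hl]] := sep i j nij.
  by rewrite -Hf fij irr in hij.
by rewrite -!Hf fij eqxx in hl.
Qed.

Arguments inj_of_sep {k h T e f}.

Lemma no2K2 (T : finType) (e : rel T) : simple_graph e -> free_in e setT twoK2 ->
  forall p q x y, e p q -> e x y -> ~~ e p x -> ~~ e p y -> ~~ e q x -> ~~ e q y -> False.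
Proof.
move=> [sym irr] H p q x y pq xy px py qx qy; apply: H.
pose f (i : 'I_4) := nth p [:: p; q; x; y] i.
have fe : forall i j, e (f i) (f j) = twoK2 i j.
  move=> [[|[|[|[|i]]]] Hi] [[|[|[|[|j]]]] Hj] //=; rewrite /f /=;
  by rewrite ?irr ?(sym q p) ?(sym x p) ?(sym y p) ?(sym x q) ?(sym y q) ?(sym y x)
     ?pq ?xy ?(negbTE px) ?(negbTE py) ?(negbTE qx) ?(negbTE qy).
exists f; split.
  apply: (@inj_of_sep _ _ _ _ _ irr fe).
  move=> [[|[|[|[|i]]]] Hi] [[|[|[|[|j]]]] Hj] //= nij;
  first [ by left | by right; exists (@Ordinal 4 0 isT) | by right; exists (@Ordinal 4 1 isT)
        | by right; exists (@Ordinal 4 2 isT) | by right; exists (@Ordinal 4 3 isT) ].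
by split=> [i|]; [rewrite inE | exact: fe].
Qed.

Arguments no2K2 {T e} _ _ {p q x y}.

Lemma noHVN (T : finType) (e : rel T) : simple_graph e -> free_in e setT HVN ->
  forall p q x y a, e p q -> e p x -> e p y -> e q x -> e q y -> e x y ->
  e a p -> e a q -> ~~ e a x -> ~~ e a y -> False.
Proof.
move=> [sym irr] H p q x y a pq px py qx qy xy ap aq ax ay; apply: H.
pose f (i : 'I_5) := nth p [:: p; q; x; y; a] i.
have fe : forall i j, e (f i) (f j) = HVN i j.
  move=> [[|[|[|[|[|i]]]]] Hi] [[|[|[|[|[|j]]]]] Hj] //=; rewrite /f /=;
  by rewrite ?irr ?(sym q p) ?(sym x p) ?(sym y p) ?(sym x q) ?(sym y q) ?(sym y x)
     ?(sym p a) ?(sym q a) ?(sym x a) ?(sym y a)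
     ?pq ?px ?py ?qx ?qy ?xy ?ap ?aq ?(negbTE ax) ?(negbTE ay).
exists f; split.
  apply: (@inj_of_sep _ _ _ _ _ irr fe).
  move=> [[|[|[|[|[|i]]]]] Hi] [[|[|[|[|[|j]]]]] Hj] //= nij;
  first [ by left | by right; exists (@Ordinal 5 0 isT) | by right; exists (@Ordinal 5 1 isT)
        | by right; exists (@Ordinal 5 2 isT) | by right; exists (@Ordinal 5 3 isT)
        | by right; exists (@Ordinal 5 4 isT) ].
by split=> [i|]; [rewrite inE | exact: fe].
Qed.

Arguments noHVN {T e} _ _ {p q x y a}.

Theorem theorem3p7 (T : finType) (e : rel T) :
  simple_graph e -> connected e ->
  free_in e setT twoK2 -> free_in e setT HVN ->
  (free_in e setT twoK2 /\ free_in e setT diamond) \/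
  (exists V1 V2 V3 V4 : {set T},
     [/\ V1 :|: V2 :|: V3 :|: V4 = setT,
         ([disjoint V1 & V2] && [disjoint V1 & V3] && [disjoint V1 & V4] &&
          [disjoint V2 & V3] && [disjoint V2 & V4] && [disjoint V3 & V4]),
         (free_in e V1 twoK2 /\ free_in e V1 paw /\
          omega_in e V1 <= omega_in e setT - 1)
         & (independent e V2 /\ independent e V3 /\ independent e V4)]).
Proof.
move=> sg _ F2 FH.
have [sym irr] := sg.
destruct (classic (has_induced e setT diamond)) as [[f [_ [_ fe]]] | nd]; last by left.
right.
set a := f (@Ordinal 4 0 isT); set b := f (@Ordinal 4 1 isT); set c := f (@Ordinal 4 2 isT).
have ab : e a b by rewrite /a /b fe.
have ac : e a c by rewrite /a /c fe.
have bc : e b c by rewrite /b /c fe.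
exists [set x | e a x], [set x | ~~ e a x && ((x == a) || ~~ e b x)],
  [set x | [&& ~~ e a x, x != a, e b x & e c x]],
  [set x | [&& ~~ e a x, x != a, e b x & ~~ e c x]].
split.
- apply/setP=> x; rewrite !inE.
  by case: (e a x); case: (x == a); case: (e b x); case: (e c x).
- rewrite -!setI_eq0; repeat (apply/andP; split);
    apply/eqP/setP => x; rewrite !inE;
    by case: (e a x); case: (x == a); case: (e b x); case: (e c x).
- split.
    move=> [g [gi [gin ge]]]; apply: F2; exists g; split => //; split => // i; rewrite inE.
  split.
    move=> [g [gi [gin ge]]].
    have gA : forall i, e a (g i) by move=> i; have := gin i; rewrite inE.
    apply: (noHVN sg FH (p := a) (q := g (@Ordinal 4 0 isT))
                        (x := g (@Ordinal 4 1 isT)) (y := g (@Ordinal 4 2 isT))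
                        (a := g (@Ordinal 4 3 isT))); rewrite ?gA ?ge //.
    by rewrite sym gA.
  apply/bigmax_leqP => A /andP [sA /forallP cA].
  have aA : a \notin A.
    by apply/negP => /(subsetP sA); rewrite inE irr.
  have cl : is_clique e setT (a |: A).
    apply/andP; split; first exact: subsetT.
    apply/forallP => x; apply/implyP; rewrite in_setU1 => /orP [/eqP -> | xA];
      apply/forallP => y; apply/implyP; rewrite in_setU1 => /orP [/eqP -> | yA];
      apply/implyP => nxy.
    + by rewrite eqxx in nxy.
    + by have := subsetP sA y yA; rewrite inE.
    + by rewrite sym; have := subsetP sA x xA; rewrite inE.
    + by have := forallP (implyP (cA x) xA) y; rewrite yA /= nxy.
  have := @leq_bigmax_cond _ (fun B => is_clique e setT B) (fun B => #|B|) _ cl.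
  rewrite cardsU1 aA /=.
  move=> h.
  have h2 : #|A| < omega_in e setT by exact: h.
  lia.
- split; [|split].
  + move=> x y; rewrite !inE => /andP [ax xb] /andP [ay yb]; apply/negP => xy.
    have [xa|xa] := eqVneq x a.
      by subst x; rewrite (negbTE ay) in xy.
    have [ya|ya] := eqVneq y a.
      by subst y; rewrite sym (negbTE ax) in xy.
    rewrite (negbTE xa) (negbTE ya) /= in xb yb.
    by apply: (no2K2 sg F2 ab xy) => //; rewrite sym.
  + move=> x y; rewrite !inE => /and4P [ax xa bx cx] /and4P [ay ya byy cy].
    apply/negP => xy.
    by apply: (noHVN sg FH (p := b) (q := c) (x := x) (y := y) (a := a)) => //;
      rewrite sym.
  + move=> x y; rewrite !inE => /and4P [ax xa bx cx] /and4P [ay ya byy cy].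
    apply/negP => xy.
    by apply: (no2K2 sg F2 ac xy).
Qed.
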